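(* Let $a$ and $b$ be coprime odd integers and let $\gamma$ be a positive integer such that $2^\gamma\,\|\,(a+b)$. Then: 1) For $\gamma\geq 2$, $OG_{(a,b)}(1)=\bigcup_{i=0}^{\gamma-1}\{d2^i : d\in OG_{(a,b)}(\gamma)\}$, where $OG_{(a,b)}(\gamma)=\{d\in\mathbb{N} : d=1 \text{ or } d \text{ is odd and } 2\,\|\,\operatorname{ord}_p(\tfrac ab) \text{ for every prime } p \text{ dividing } d\}$. 2) $EG_{(a,b)}(1)=\{d\in\mathbb{N} : d=1 \text{ or } d \text{ is odd and there exists } s\geq 2 \text{ such that } 2^s\,\|\,\operatorname{ord}_p(\tfrac ab) \text{ for every prime } p \text{ dividing } d\}$. 3) $OG_{(a,b)}(0)=OG_{(a,b)}(1)\cup\{2d : d\in OG_{(a,b)}(1)\}$. 4) $EG_{(a,b)}(0)=EG_{(a,b)}(1)\cup\{2d : d\in EG_{(a,b)}(1)\}$.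
   Context: For coprime nonzero integers $a,b$ and an integer $\beta\geq0$, $OG_{(a,b)}(\beta)$ (resp. $EG_{(a,b)}(\beta)$) is the set of positive integers $d$ such that $2^\beta d\mid(a^k+b^k)$ for some odd integer $k\geq1$ (resp. some even integer $k\geq 2$). For $n$ coprime to $ab$, $\operatorname{ord}_n(\frac ab)$ is the multiplicative order of $ab^{-1}$ modulo $n$ (conditions on it presuppose it is defined). $2^s\,\|\,m$ means $2^s\mid m$ and $2^{s+1}\nmid m$. *)

(* Defs.v *)
From mathcomp Require Import all_boot all_order all_algebra.
Set Implicit Arguments. Unset Strict Implicit. Unset Printing Implicit Defensive.
Import Order.TTheory GRing.Theory Num.Theory.
Local Open Scope ring_scope.

Definition OG (a b : int) (beta : nat) (d : nat) : Prop :=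
  (0 < d)%N /\ exists k : nat, odd k /\ ((2 ^ beta * d)%N%:Z %| a ^+ k + b ^+ k)%Z.

Definition EG (a b : int) (beta : nat) (d : nat) : Prop :=
  (0 < d)%N /\ exists k : nat, ~~ odd k /\ (2 <= k)%N /\
    ((2 ^ beta * d)%N%:Z %| a ^+ k + b ^+ k)%Z.

(* ord_is a b n k : n is coprime to ab (so ord_n(a/b) is defined) and k is the
   multiplicative order of a b^{-1} modulo n, i.e. the least k >= 1 with
   (a b^{-1})^k = 1 mod n, equivalently n | a^k - b^k. *)
Definition ord_is (a b : int) (n k : nat) : Prop :=
  coprimez n%:Z (a * b) /\ (0 < k)%N /\ (n%:Z %| a ^+ k - b ^+ k)%Z /\
  forall j : nat, (0 < j)%N -> (j < k)%N -> ~ (n%:Z %| a ^+ j - b ^+ j)%Z.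

Definition exact2 (s m : nat) : Prop := (2 ^ s %| m)%N /\ ~ (2 ^ s.+1 %| m)%N.

Definition ord_exact2 (a b : int) (n s : nat) : Prop :=
  exists k : nat, ord_is a b n k /\ exact2 s k.

(* Main.v *)
Require Import Defs.
From mathcomp Require Import all_boot all_order all_algebra.
From mathcomp Require Import zify ring.
Import Order.TTheory GRing.Theory Num.Theory.
Local Open Scope ring_scope.

Lemma key (x z : int) n : exists S, x^+n - z^+n = (x - z) * S /\
  (x - z %| S - n%:Z * x^+n.-1)%Z.
Proof.
elim: n => [|n [S [E D]]].
  by exists 0; rewrite !expr0 subrr mulr0 mul0r subr0 dvdz0.
exists (x * S + z^+n); split.
  have -> : x^+n.+1 - z^+n.+1 = x*(x^+n - z^+n) + (x - z) * z^+n.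
    by rewrite !exprS; ring.
  by rewrite E; ring.
have hx: x * (n%:Z * x^+n.-1) = n%:Z * x^+n.
  by case: n {E D} => [|m]; rewrite /= ?mul0r ?mulr0 // exprS; ring.
have -> : x*S + z^+n - (n.+1)%:Z * x^+(n.+1).-1 =
   x*(S - n%:Z*x^+n.-1) - (x^+n - z^+n).
  by rewrite mulrBr hx /= -addn1 PoszD; ring.
by rewrite rpredB ?dvdz_mull // E dvdz_mulr.
Qed.

Lemma dvd_oddsum (x y : int) n : odd n -> (x + y %| x^+n + y^+n)%Z.
Proof.
move=> on; have [S [E _]] := key x (- y) n.
have -> : x^+n + y^+n = x^+n - (-y)^+n by rewrite exprNn -signr_odd on expr1 mulN1r opprK.
by rewrite E opprK dvdz_mulr.
Qed.

Lemma lift (x y : int) (p : nat) : odd p -> (p%:Z %| x + y)%Z ->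
  ((p%:Z * (x + y)) %| x^+p + y^+p)%Z.
Proof.
move=> op hp; have [S [E D]] := key x (- y) p.
have -> : x^+p + y^+p = x^+p - (-y)^+p by rewrite exprNn -signr_odd op expr1 mulN1r opprK.
rewrite E opprK mulrC dvdz_mul //.
rewrite opprK in D; have hD := dvdz_trans hp D.
have -> : S = (S - p%:Z * x ^+ p.-1) + p%:Z * x^+p.-1 by ring.
by rewrite rpredD // dvdz_mulr.
Qed.

Lemma primeZ (p : nat) (x y : int) : prime p -> (p%:Z %| x * y)%Z ->
  (p%:Z %| x)%Z \/ (p%:Z %| y)%Z.
Proof. by move=> pp; rewrite !dvdzE abszM Euclid_dvdM // => /orP. Qed.

Lemma Lind (X Y : int) (d : nat) : odd d ->
  (forall p, prime p -> (p %| d)%N -> exists2 m, odd m & (p%:Z %| X^+m + Y^+m)%Z) ->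
  exists2 k, odd k & (d%:Z %| X^+k + Y^+k)%Z.
Proof.
elim/ltn_ind: d => d IH od H.
case: (ltnP 1 d) => [d1|dle].
  have [p pp pd] := pdivP d1.
  set d0 := (d %/ p)%N.
  have Ed : d = (p * d0)%N by rewrite /d0 mulnC divnK.
  have op : odd p by apply: dvdn_odd pd od.
  have p1 := prime_gt1 pp.
  have d0d : (d0 %| d)%N by rewrite Ed dvdn_mull.
  have od0 : odd d0 by apply: dvdn_odd d0d od.
  have ltd0 : (d0 < d)%N by rewrite /d0 ltn_Pdiv // ltnW.
  have [k0 ok0 Hk0] := IH d0 ltd0 od0 (fun q pq qd => H q pq (dvdn_trans qd d0d)).
  have [m om Hm] := H p pp pd.
  have hU : (d0%:Z %| X^+(k0 * m) + Y^+(k0 * m))%Z.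
    rewrite !exprM; have := dvd_oddsum (X^+k0) (Y^+k0) m om; exact: dvdz_trans.
  have hV : (p%:Z %| X^+(k0 * m) + Y^+(k0 * m))%Z.
    by rewrite mulnC !exprM; apply: dvdz_trans Hm (dvd_oddsum _ _ _ ok0).
  exists (k0 * m * p)%N; first by rewrite !oddM ok0 om op.
  rewrite Ed PoszM !(exprM _ (k0 * m)).
  apply: dvdz_trans (lift _ _ _ op hV).
  by apply: dvdz_mul.
have -> : d = 1%N by clear IH H; move: od dle; case: d => [|[|]].
by exists 1%N => //; rewrite dvdzE dvd1n.
Qed.

Lemma powdiv (a b d : int) (t j : nat) : (t %| j)%N -> (d %| a^+t - b^+t)%Z ->
  (d %| a^+j - b^+j)%Z.
Proof.
move=> /dvdnP [c ->] h; rewrite mulnC !exprM.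
have [S [E _]] := key (a^+t) (b^+t) c.
by rewrite E dvdz_mulr.
Qed.

Lemma npdiv (a b : int) (p k : nat) : prime p -> coprimez a b -> (0 < k)%N ->
  (p%:Z %| a^+k + b^+k)%Z -> ~~ (p %| `|a|)%N.
Proof.
move=> pp cab k0 hk; apply/negP => pa.
have pak : (p%:Z %| a^+k)%Z by rewrite dvdzE abszX Euclid_dvdX // pa.
have : (p%:Z %| b^+k)%Z.
  have -> : b^+k = (a^+k + b^+k) - a^+k by ring.
  by rewrite rpredB.
rewrite dvdzE abszX Euclid_dvdX // => /andP [pb _].
move: cab; rewrite coprimezE => /eqP cab.
have : (p %| gcdn `|a| `|b|)%N by rewrite dvdn_gcd pa pb.
rewrite cab dvdn1 => /eqP p1; by rewrite p1 in pp.
Qed.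

Arguments npdiv {a b p k}.
Arguments powdiv {a b d t j}.
Arguments primeZ {p x y}.

Lemma exact_lem t k : (0 < k)%N -> (t %| k * 2)%N -> ~~ (t %| k)%N ->
  exact2 (logn 2 k).+1 t.
Proof.
move=> k0 tk ntk.
have t0 : (0 < t)%N by apply: dvdn_gt0 tk; rewrite muln_gt0 k0.
have [k' ck' Ek] := pfactor_coprime (isT : prime 2) k0.
have [t' ct' Et] := pfactor_coprime (isT : prime 2) t0.
set u := logn 2 k in Ek *; set v := logn 2 t in Et *.
have ck'2 : coprime (2 ^ v) k' by rewrite coprimeXl.
have hv : (v <= u.+1)%N.
  have : (2 ^ v %| k' * 2 ^ u.+1)%N.
    rewrite expnSr mulnA -Ek; apply: dvdn_trans tk.
    by rewrite Et dvdn_mull.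
  by rewrite Gauss_dvdr // dvdn_Pexp2l.
have ht' : (t' %| k')%N.
  have : (t' %| k' * 2 ^ u.+1)%N.
    rewrite expnSr mulnA -Ek; apply: dvdn_trans tk.
    by rewrite Et dvdn_mulr.
  by rewrite Gauss_dvdl // coprimeXr // coprime_sym.
have hvu : v = u.+1.
  apply/eqP; rewrite eqn_leq hv /=; rewrite ltnNge; apply/negP => vu.
  by move: ntk; rewrite Et Ek dvdn_mul // dvdn_exp2l.
rewrite /exact2 !pfactor_dvdn // -/v hvu leqnn; split => //.
by rewrite ltnn.
Qed.

Lemma ordfwd (a b : int) (p k : nat) : prime p -> odd p -> coprimez a b ->
  (0 < k)%N -> (p%:Z %| a^+k + b^+k)%Z ->
  exists t, [/\ ord_is a b p t, (t %| k * 2)%N & ~~ (t %| k)%N].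
Proof.
move=> pp op cab k0 hk.
have npa := npdiv pp cab k0 hk.
have npb : ~~ (p %| `|b|)%N.
  have cba : coprimez b a by rewrite coprimez_sym.
  by apply: (@npdiv b a p k pp cba k0); rewrite addrC.
have cp : coprimez p%:Z (a * b).
  by rewrite coprimezE abszM /= prime_coprime // Euclid_dvdM // negb_or npa npb.
have hk2 : (p%:Z %| a^+(k * 2) - b^+(k * 2))%Z.
  by rewrite !exprM subr_sqr dvdz_mull.
have exP : exists j, (0 < j)%N && (p%:Z %| a^+j - b^+j)%Z.
  by exists (k * 2)%N; rewrite muln_gt0 k0 hk2.
case: (ex_minnP exP) => t /andP [t0 ht] tmin.
have tdiv : forall j, (p%:Z %| a^+j - b^+j)%Z -> (t %| j)%N.
  move=> j hj.
  case: (posnP (j %% t)) => [r0|rpos]; first by rewrite /dvdn r0.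
  have E : a^+j - b^+j = a^+(j %% t) * (a^+(j %/ t * t) - b^+(j %/ t * t))
          + b^+(j %/ t * t) * (a^+(j %% t) - b^+(j %% t)).
    rewrite {1 2}(divn_eq j t) !exprD; ring.
  have h1 : (p%:Z %| a^+(j %/ t * t) - b^+(j %/ t * t))%Z.
    by apply: powdiv ht; rewrite dvdn_mull.
  have : (p%:Z %| b^+(j %/ t * t) * (a^+(j %% t) - b^+(j %% t)))%Z.
    have -> : b^+(j %/ t * t) * (a^+(j %% t) - b^+(j %% t)) =
       (a^+j - b^+j) - a^+(j %% t) * (a^+(j %/ t * t) - b^+(j %/ t * t)).
      by rewrite E; ring.
    by rewrite rpredB // dvdz_mull.
  case/(primeZ pp) => [|hr].
    by rewrite dvdzE abszX Euclid_dvdX // (negPf npb).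
  have := tmin (j %% t)%N; rewrite rpos hr => /(_ isT).
  by rewrite leqNgt ltn_pmod.
exists t; split.
- split; first exact: cp. split; first done. split; first done.
  move=> j j0 jt hj.
  by have := tmin j; rewrite j0 hj leqNgt jt => /(_ isT).
- exact: tdiv.
- apply/negP => tk.
  have hk' := powdiv tk ht.
  have : (p%:Z %| 2%:Z * a^+k)%Z.
    have -> : 2%:Z * a^+k = (a^+k + b^+k) + (a^+k - b^+k) by ring.
    by rewrite rpredD.
  case/(primeZ pp).
    rewrite dvdzE /= => p2.
    have := dvdn_leq (isT : (0 < 2)%N) p2.
    have := prime_gt1 pp.
    by case: p pp op {npa npb cp hk2 exP tmin tdiv ht hk hk' p2} => [|[|[|]]].
  by rewrite dvdzE abszX Euclid_dvdX // (negPf npa).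
Qed.

Lemma ordback (a b : int) (p s : nat) : prime p -> (0 < s)%N ->
  ord_exact2 a b p s ->
  exists2 m, odd m & (p%:Z %| (a^+(2^s.-1))^+m + (b^+(2^s.-1))^+m)%Z.
Proof.
move=> pp s0 [t [[_ [t0 [ht tmin]]] [h1 h2]]].
have Et : t = (t %/ 2^s * 2^s)%N by rewrite divnK.
set m := (t %/ 2^s)%N in Et.
have om : odd m.
  apply/negPn/negP; rewrite -dvdn2 => m2; apply: h2.
  by rewrite Et expnSr mulnC dvdn_mul.
have m0 : (0 < m)%N by move: t0; rewrite Et muln_gt0 => /andP [].
have Es : (2 ^ s = 2 ^ s.-1 * 2)%N by rewrite -expnSr prednK.
set h := (2 ^ s.-1 * m)%N.
have Eth : t = (h * 2)%N by rewrite Et Es /h; ring.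
move: ht; rewrite Eth (exprM a h 2) (exprM b h 2) subr_sqr; case/(primeZ pp) => hh.
  have h0 : (0 < h)%N by rewrite /h muln_gt0 expn_gt0 m0.
  by exfalso; apply: (tmin h h0 _ hh); rewrite Eth; lia.
by exists m => //; rewrite -!exprM.
Qed.

Lemma oddZ (x : int) : ~~ (2%:Z %| x)%Z -> exists q, x = 2 * q + 1.
Proof.
move=> hx; exists (x %/ 2)%Z.
have E := divz_eq x 2.
have h0 : 0 <= (x %% 2)%Z by rewrite modz_ge0.
have h1 : (x %% 2)%Z < 2 by rewrite ltz_pmod.
have hn : (x %% 2)%Z != 0 by apply/eqP => h; move/negP: hx; apply; apply/dvdz_mod0P.
lia.
Qed.

Arguments oddZ {x}.

Lemma oddXz n (x : int) : ~~ (2%:Z %| x)%Z -> ~~ (2%:Z %| x^+n)%Z.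
Proof. by rewrite !dvdzE abszX Euclid_dvdX // negb_and => ->. Qed.

Lemma evsum (a b : int) k : ~~ (2%:Z %| a)%Z -> ~~ (2%:Z %| b)%Z ->
  (2%:Z %| a^+k + b^+k)%Z.
Proof.
move=> ha hb; have [q Eq] := oddZ (oddXz k _ ha); have [r Er] := oddZ (oddXz k _ hb).
by apply/dvdzP; exists (q + r + 1); rewrite Eq Er; ring.
Qed.

Lemma ev4 (a b : int) j : ~~ (2%:Z %| a)%Z -> ~~ (2%:Z %| b)%Z ->
  ~~ (4%:Z %| a^+(j * 2) + b^+(j * 2))%Z.
Proof.
move=> ha hb; have [q Eq] := oddZ (oddXz j _ ha); have [r Er] := oddZ (oddXz j _ hb).
rewrite !exprM Eq Er; apply/negP => /dvdzP [w Ew].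
nia.
Qed.

Lemma v2odd (a b : int) g k : ~~ (2%:Z %| a)%Z -> ~~ (2%:Z %| b)%Z ->
  (0 < g)%N -> ((2 ^ g)%N%:Z %| a + b)%Z -> ~~ ((2 ^ g.+1)%N%:Z %| a + b)%Z ->
  odd k ->
  ((2 ^ g)%N%:Z %| a^+k + b^+k)%Z /\ ~~ ((2 ^ g.+1)%N%:Z %| a^+k + b^+k)%Z.
Proof.
move=> ha hb g0 hg hg1 ok; split.
  exact: dvdz_trans hg (dvd_oddsum _ _ _ ok).
have [S [E D]] := key a (- b) k.
have -> : a^+k + b^+k = a^+k - (-b)^+k by rewrite exprNn -signr_odd ok expr1 mulN1r opprK.
rewrite E opprK; rewrite opprK in D.
have h2 : (2%:Z %| a + b)%Z.
  apply: dvdz_trans hg; rewrite dvdzE /=.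
  by rewrite -(prednK g0) expnS dvdn_mulr.
have oS : ~~ (2%:Z %| S)%Z.
  apply/negP => hS.
  have : (2%:Z %| k%:Z * a ^+ k.-1)%Z.
    have -> : k%:Z * a ^+ k.-1 = S - (S - k%:Z * a ^+ k.-1) by ring.
    by rewrite rpredB // (dvdz_trans h2 D).
  case/(primeZ (isT : prime 2)).
    by rewrite dvdzE /= dvdn2 ok.
  by apply/negP; apply: oddXz.
move: hg hg1 oS; rewrite !dvdzE abszM /= => hg hg1 oS.
have Ec : `|(a + b)%R|%N = (`|(a + b)%R| %/ 2 ^ g * 2 ^ g)%N by rewrite divnK.
set c := (`|(a + b)%R| %/ 2 ^ g)%N in Ec.
rewrite Ec expnSr mulnAC (mulnC (2 ^ g)%N 2) dvdn_pmul2r ?expn_gt0 // Euclid_dvdM // negb_or oS andbT.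
apply/negP => c2; move/negP: hg1; apply.
by rewrite Ec expnSr mulnC dvdn_mul.
Qed.

Arguments ordfwd {a b p k}.
Arguments ordback {a b p s}.
Arguments exact_lem {t k}.

Section Main.
Variables (a b : int) (g : nat).
Hypotheses (ha : ~~ (2 %| a)%Z) (hb : ~~ (2 %| b)%Z) (cab : coprimez a b)
  (g0 : (0 < g)%N) (hg : ((2 ^ g)%N%:Z %| a + b)%Z)
  (hg1 : ~~ ((2 ^ g.+1)%N%:Z %| a + b)%Z).

Let ha' : ~~ (2%:Z %| a)%Z := ha.
Let hb' : ~~ (2%:Z %| b)%Z := hb.

Lemma part3 d : OG a b 0 d <->
         (OG a b 1 d \/ exists2 d' : nat, OG a b 1 d' & d = (2 * d')%N).
Proof.
split.
  move=> [d0 [k [ok hd]]]; rewrite expn0 mul1n in hd.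
  case: (boolP (odd d)) => od.
    left; split => //; exists k; split => //.
    move: hd (evsum _ _ k ha' hb'); rewrite !dvdzE /= => hd h2.
    by rewrite expn1 Gauss_dvd ?coprime2n // h2 hd.
  right; exists (d %/ 2)%N; last by rewrite mulnC divnK // dvdn2.
  have Ed : d = (d %/ 2 * 2)%N by rewrite divnK // dvdn2.
  split; first by lia.
  by exists k; split => //; rewrite expn1 mulnC -Ed.
case=> [[d0 [k [ok hd]]]|[d' [d0 [k [ok hd]]] ->]].
  split => //; exists k; split => //; rewrite expn0 mul1n.
  by apply: dvdz_trans hd; rewrite dvdzE /= dvdn_mull.
split; first by lia.
by exists k; split => //; rewrite expn0 mul1n -(expn1 2).
Qed.

Lemma part4 d : EG a b 0 d <->
         (EG a b 1 d \/ exists2 d' : nat, EG a b 1 d' & d = (2 * d')%N).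
Proof.
split.
  move=> [d0 [k [ok [k2 hd]]]]; rewrite expn0 mul1n in hd.
  case: (boolP (odd d)) => od.
    left; split => //; exists k; split => //; split => //.
    move: hd (evsum _ _ k ha' hb'); rewrite !dvdzE /= => hd h2.
    by rewrite expn1 Gauss_dvd ?coprime2n // h2 hd.
  right; exists (d %/ 2)%N; last by rewrite mulnC divnK // dvdn2.
  have Ed : d = (d %/ 2 * 2)%N by rewrite divnK // dvdn2.
  split; first by lia.
  by exists k; split => //; split => //; rewrite expn1 mulnC -Ed.
case=> [[d0 [k [ok [k2 hd]]]]|[d' [d0 [k [ok [k2 hd]]]] ->]].
  split => //; exists k; split => //; split => //; rewrite expn0 mul1n.
  by apply: dvdz_trans hd; rewrite dvdzE /= dvdn_mull.
split; first by lia.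
by exists k; split => //; split => //; rewrite expn0 mul1n -(expn1 2).
Qed.

Let v2k k (ok : odd k) := v2odd _ _ _ _ ha' hb' g0 hg hg1 ok.

Lemma part1a d : OG a b 1 d <->
  exists2 i : nat, (i < g)%N & exists2 d' : nat, OG a b g d' & d = (d' * 2 ^ i)%N.
Proof.
split.
  move=> [d0 [k [ok hd]]].
  have [d' cd' Ed] := pfactor_coprime (isT : prime 2) d0.
  set i := logn 2 d in Ed.
  have [v1 v2] := v2k _ ok.
  move: hd v1 v2; rewrite !dvdzE /= => hd v1 v2.
  exists i.
    rewrite ltnNge; apply/negP => gi; move/negP: v2; apply.
    apply: dvdn_trans hd; rewrite expn1 Ed mulnCA; apply: dvdn_mull.
    by rewrite -expnS dvdn_exp2l.
  exists d' => //; split.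
    by move: d0; rewrite Ed muln_gt0 => /andP [].
  exists k; split => //; rewrite dvdzE /=.
  rewrite Gauss_dvd ?coprimeXl // v1 /=.
  by apply: dvdn_trans hd; rewrite Ed mulnCA dvdn_mulr.
move=> [i ig [d' [d'0 [k [ok hd]]] ->]].
split; first by rewrite muln_gt0 d'0 expn_gt0.
exists k; split => //; apply: dvdz_trans hd; rewrite dvdzE /=.
rewrite expn1 mulnCA -expnS (mulnC (2 ^ g)%N) dvdn_mul //.
by rewrite dvdn_exp2l.
Qed.

Lemma part1b d : OG a b g d <->
  (d = 1%N \/ (odd d /\ forall p : nat, prime p -> (p %| d)%N -> ord_exact2 a b p 1)).
Proof.
split.
  move=> [d0 [k [ok hd]]].
  have [v1 v2] := v2k _ ok.
  have od : odd d.
    apply/negPn/negP; rewrite -dvdn2 => d2; move/negP: v2; apply.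
    apply: dvdz_trans hd; rewrite dvdzE /= expnSr dvdn_mul //.
  case: (eqVneq d 1%N) => [->|_]; first by left.
  right; split => // p pp pd.
  have op : odd p by apply: dvdn_odd pd od.
  have hp : (p%:Z %| a^+k + b^+k)%Z.
    by apply: dvdz_trans hd; rewrite dvdzE /= dvdn_mull.
  have [t [ot tk ntk]] := ordfwd pp op cab (odd_gt0 ok) hp.
  exists t; split => //.
  have := exact_lem (odd_gt0 ok) tk ntk.
  by rewrite logn_coprime // coprime2n.
case=> [->|[od H]].
  split => //; exists 1%N; split => //; rewrite muln1 !expr1 //.
have [k ok hk] : exists2 k, odd k & (d%:Z %| a^+k + b^+k)%Z.
  apply: Lind => // p pp pd.
  have := ordback pp (isT : (0 < 1)%N) (H p pp pd).
  by rewrite /= expn0 !expr1.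
split; first exact: odd_gt0.
exists k; split => //.
have [v1 _] := v2k _ ok.
move: v1 hk; rewrite !dvdzE /= => v1 hk.
by rewrite Gauss_dvd ?coprimeXl ?coprime2n // v1 hk.
Qed.

Lemma part2 d : EG a b 1 d <->
  (d = 1%N \/ (odd d /\ exists2 s : nat, (2 <= s)%N &
       forall p : nat, prime p -> (p %| d)%N -> ord_exact2 a b p s)).
Proof.
split.
  move=> [d0 [k [ek [k2 hd]]]].
  have k0 : (0 < k)%N by apply: leq_trans k2.
  have Ek : k = (k %/ 2 * 2)%N by rewrite divnK // dvdn2.
  have od : odd d.
    apply/negPn/negP; rewrite -dvdn2 => d2.
    have := ev4 _ _ (k %/ 2) ha' hb'; rewrite -Ek => /negP; apply.
    apply: dvdz_trans hd; rewrite dvdzE /= expn1.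
    by rewrite (_ : 4 = 2 * 2)%N // dvdn_mul.
  case: (eqVneq d 1%N) => [->|_]; first by left.
  right; split => //; exists (logn 2 k).+1.
    by rewrite ltnS -pfactor_dvdn // dvdn2.
  move=> p pp pd.
  have op : odd p by apply: dvdn_odd pd od.
  have hp : (p%:Z %| a^+k + b^+k)%Z.
    by apply: dvdz_trans hd; rewrite dvdzE /= dvdn_mull.
  have [t [ot tk ntk]] := ordfwd pp op cab k0 hp.
  by exists t; split => //; apply: exact_lem.
case=> [->|[od [s s2 H]]].
  split => //; exists 2%N; split => //; split => //.
  by rewrite muln1 expn1; apply: evsum.
have s0 : (0 < s)%N by apply: leq_trans s2.
have [M oM hM] : exists2 M, odd M &
    (d%:Z %| (a^+(2^s.-1))^+M + (b^+(2^s.-1))^+M)%Z.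
  by apply: Lind => // p pp pd; apply: ordback pp s0 (H p pp pd).
rewrite -!exprM in hM.
have e2 : (2 <= 2 ^ s.-1)%N.
  by rewrite -{1}(expn1 2) leq_pexp2l //; case: s s2 {H s0 hM} => [|[|]].
split; first exact: odd_gt0.
exists (2 ^ s.-1 * M)%N; split.
  by rewrite oddM oddX; case: s s2 {H s0 hM e2} => [|[|]].
split.
  have M0 := odd_gt0 oM.
  by apply: leq_trans e2 _; rewrite leq_pmulr.
move: hM (evsum _ _ (2 ^ s.-1 * M) ha' hb'); rewrite !dvdzE /= => hM h2.
by rewrite expn1 Gauss_dvd ?coprime2n // h2 hM.
Qed.

End Main.

Theorem theorem2p21 (a b : int) (g : nat) :
  ~~ (2 %| a)%Z -> ~~ (2 %| b)%Z -> coprimez a b -> (0 < g)%N ->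
  ((2 ^ g)%N%:Z %| a + b)%Z -> ~~ ((2 ^ g.+1)%N%:Z %| a + b)%Z ->
  [/\ (* 1) *)
      ((2 <= g)%N ->
        (forall d : nat, OG a b 1 d <->
           exists2 i : nat, (i < g)%N &
             exists2 d' : nat, OG a b g d' & d = (d' * 2 ^ i)%N) /\
        (forall d : nat, OG a b g d <->
           (d = 1%N \/ (odd d /\
              forall p : nat, prime p -> (p %| d)%N -> ord_exact2 a b p 1)))),
      (* 2) *)
      (forall d : nat, EG a b 1 d <->
         (d = 1%N \/ (odd d /\ exists2 s : nat, (2 <= s)%N &
              forall p : nat, prime p -> (p %| d)%N -> ord_exact2 a b p s))),
      (* 3) *)
      (forall d : nat, OG a b 0 d <->
         (OG a b 1 d \/ exists2 d' : nat, OG a b 1 d' & d = (2 * d')%N))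
    & (* 4) *)
      (forall d : nat, EG a b 0 d <->
         (EG a b 1 d \/ exists2 d' : nat, EG a b 1 d' & d = (2 * d')%N))].
Proof.
move=> ha hb cab g0 hg hg1; split.
- move=> _; split => d.
    exact: part1a.
  exact: part1b.
- exact: part2.
- exact: (@part3 a b g ha hb cab g0 hg hg1).
- exact: (@part4 a b g ha hb cab g0 hg hg1).
Qed.
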